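(* Let $a=(a_k)_{k=0}^{d-1}\in\mathbb C^d$. Then for every $t\in(0,1)$ there exists at least one $n\in\{0,1,\dots,d-1\}$ such that $|a_n|\ge\|a\|_1\,t^{d-n}(t^{-1}-1)$.
   Context: $\|a\|_1=\sum_{k=0}^{d-1}|a_k|$. *)

(* Defs.v *)
From HB Require Import structures.
From mathcomp Require Import all_boot all_order all_algebra.
From mathcomp Require Import complex.
Set Implicit Arguments. Unset Strict Implicit. Unset Printing Implicit Defensive.
Import Order.TTheory GRing.Theory Num.Theory.
Local Open Scope ring_scope.

Definition l1norm (R : rcfType) (d : nat) (a : 'I_d -> R[i]) : R :=
  \sum_(k < d) Normc.normc (a k).

(* Main.v *)
Require Import Defs.
From HB Require Import structures.
From mathcomp Require Import all_boot all_order all_algebra.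
From mathcomp Require Import complex.
Import Order.TTheory GRing.Theory Num.Theory.
Local Open Scope ring_scope.

Lemma telesum (R : rcfType) (t : R) (k : nat) : t != 0 ->
  \sum_(n < k) t ^+ (k - n) * (t^-1 - 1) = 1 - t ^+ k.
Proof.
move=> t0; elim: k => [|k IH]; first by rewrite big_ord0 expr0 subrr.
rewrite big_ord_recl subn0.
under eq_bigr => i _ do rewrite lift0 /= subSS.
have e : t ^+ k.+1 * t^-1 = t ^+ k by rewrite exprSr -mulrA mulfV // mulr1.
by rewrite IH mulrBr mulr1 e addrC addrA subrK.
Qed.

Theorem mainTheorem7 (R : rcfType) (d : nat) (a : 'I_d -> R[i]) (t : R) :
  (0 < d)%N ->
  0 < t < 1 ->
  exists n : 'I_d,
    l1norm a * t ^+ (d - n) * (t^-1 - 1) <= Normc.normc (a n).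
Proof.
move=> d0 /andP[t0 t1].
case: (boolP [exists n : 'I_d, l1norm a * t ^+ (d - n) * (t^-1 - 1) <= Normc.normc (a n)]).
  by move=> /existsP[n Hn]; exists n.
rewrite negb_exists => /forallP H.
have Hlt : forall n : 'I_d, Normc.normc (a n) < l1norm a * t ^+ (d - n) * (t^-1 - 1).
  by move=> n; rewrite ltNge; apply: H.
have L0 : 0 <= l1norm a.
  by rewrite /l1norm; apply: sumr_ge0 => i _; case: (a i) => x y; rewrite /Normc.normc sqrtr_ge0.
have : l1norm a < l1norm a * (1 - t ^+ d).
  rewrite -(@telesum R t d (lt0r_neq0 t0)) mulr_sumr.
  rewrite {1}/l1norm; apply: ltr_sum.
    by apply/hasP; exists (Ordinal d0); rewrite ?mem_index_enum.
  by move=> i _; rewrite mulrA; apply: Hlt.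
rewrite mulrBr mulr1 ltNge => /negP Hc; exfalso; apply: Hc.
rewrite lerBlDr lerDl; apply: mulr_ge0; [exact: L0 | apply: exprn_ge0; exact: ltW].
Qed.
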